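(* Let $G$ be a graph and $\mathscr{C}$ a skew graph category such that $(G,\emptyset,\emptyset)\in\mathscr{C}$. Then for all $k,l\in\mathbb{N}_0$ the vector space $\mathscr{C}^G(k,l)$ has the linear basis $\{\hat T^{\mathbf{a}\mathbf{b}}_G\mid[\mathbf{a},\mathbf{b}]\in W^{\mathscr{C}}_G(k,l)\}$.
   Context: Graphs are finite, undirected, without multiple edges, loops allowed, up to isomorphism; $N_k$ is the edgeless graph on $k$ vertices; graph homomorphisms map edges (including loops) to edges. A vertex overlap of graphs $K,H$ is a subset $f\subset V(K)\times V(H)$ in which each vertex occurs at most once; $K\cup_fH$ is the quotient of $K\sqcup H$ identifying $v$ with $w$ for $(v,w)\in f$ (edges between vertices of the quotient iff between some representatives), with induced maps $f_K,f_H$. Bilabelled graph: $(K,\mathbf{a},\mathbf{b})$, $\mathbf{a}\in V(K)^k$, $\mathbf{b}\in V(K)^l$, up to isomorphism preserving tuples; $\mathscr{C}(k,l)$ those in $\mathscr{C}$ with $k$ inputs, $l$ outputs. Operations: $f$-union $(K,\mathbf{a},\mathbf{b})\cup_f(H,\mathbf{c},\mathbf{d})=(K\cup_fH,f_K(\mathbf{a})f_H(\mathbf{c}),f_K(\mathbf{b})f_H(\mathbf{d}))$; composition (for $|\mathbf{b}|=|\mathbf{c}|$) $(H,\mathbf{c},\mathbf{d})\cdot(K,\mathbf{a},\mathbf{b})=(H\cdot K,\mathbf{a},\mathbf{d})$ with $H\cdot K$ the quotient of $K\sqcup H$ identifying $b_i$ with $c_i$; involution swaps the tuples. $\ker\mathbf{b}$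 is the partition of positions by equal entries. A skew graph category is a set of bilabelled graphs containing $(N_0,\emptyset,\emptyset)$, $(M,(v),(v))$, $(M,\emptyset,(v,v))$ ($M$ the one-vertex loopless graph with vertex $v$), closed under all $f$-unions, under compositions $\mathbf{H}\cdot\mathbf{K}$ with $\mathbf{K}=(K,\mathbf{a},\mathbf{b}),\mathbf{H}=(H,\mathbf{c},\mathbf{d})$, $\ker\mathbf{b}=\ker\mathbf{c}$, and under involution. With the vertices of $G$ labelled $1,\dots,n$, for a bilabelled graph $\mathbf{K}=(K,\mathbf{a},\mathbf{b})$ the map $\hat T^G_{\mathbf{K}}\colon(\mathbb{C}^n)^{\otimes k}\to(\mathbb{C}^n)^{\otimes l}$ has entries $[\hat T^G_{\mathbf{K}}]_{\mathbf{j}\mathbf{i}}=\#\{\phi\colon K\to G\text{ injective homomorphism}\mid\phi(\mathbf{a})=\mathbf{i},\phi(\mathbf{b})=\mathbf{j}\}$, and $\mathscr{C}^G(k,l):=\mathrm{span}\{\hat T^G_{\mathbf{K}}\mid\mathbf{K}\in\mathscr{C}(k,l)\}$. $W_G(k,l):=(V(G)^k\times V(G)^l)/\mathrm{Aut}\,G$ (diagonal action), with classes $[\mathbf{a},\mathbf{b}]$; $\hat T^{\mathbf{a}\mathbf{b}}_G:=\hat T^G_{(G,\mathbf{a},\mathbf{b})}$, which depends only on $[\mathbf{a},\mathbf{b}]$; and $W^{\mathscr{C}}_G(k,l):=\{[\mathbf{a},\mathbf{b}]\in W_G(k,l)\mid(G,\mathbf{a},\mathbf{b})\in\mathscr{C}(k,l)\}$.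 *)

(* Defs.v *)
From Stdlib Require List.
From HB Require Import structures.
From mathcomp Require Import all_boot all_order all_algebra fingroup perm algC.
Set Implicit Arguments. Unset Strict Implicit. Unset Printing Implicit Defensive.
Import GRing.Theory Num.Theory.

(* A (finite, undirected, loops allowed, no multi-edges) graph on the vertex
   set 'I_n.  The stored relation [adj] need not be symmetric: the edge
   relation is its symmetrisation [edge].  Loops are edges x -- x. *)
Record graph := Graph { nv : nat; adj : rel 'I_nv }.
Arguments adj : clear implicits.

Definition edge (K : graph) (x y : 'I_(nv K)) : bool := adj K x y || adj K y x.
Arguments edge : clear implicits.

Record bilab := BL { bgr : graph; bin : seq 'I_(nv bgr); bout : seq 'I_(nv bgr) }.
Arguments bin : clear implicits.
Arguments bout : clear implicits.

Definition iso_bl (X Y : bilab) : Prop :=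
  exists f : 'I_(nv (bgr X)) -> 'I_(nv (bgr Y)),
    bijective f /\
    (forall x y, edge (bgr X) x y = edge (bgr Y) (f x) (f y)) /\
    map f (bin X) = bin Y /\ map f (bout X) = bout Y.

Definition overlap (m n : nat) (R : 'I_m -> 'I_n -> Prop) : Prop :=
  (forall x y y', R x y -> R x y' -> y = y') /\
  (forall x x' y, R x y -> R x' y -> x = x').

(* [glue K H R Q gK gH]: Q, together with gK : V(K) -> V(Q), gH : V(H) -> V(Q),
   is (isomorphic to) the quotient of the disjoint union K ⊔ H obtained by
   identifying v with w whenever R v w (R a vertex overlap / partial matching),
   with edges between two vertices of the quotient iff there is an edge between
   some representatives; gK, gH are the induced maps. *)
Definition glue (K H Q : graph) (R : 'I_(nv K) -> 'I_(nv H) -> Prop)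
  (gK : 'I_(nv K) -> 'I_(nv Q)) (gH : 'I_(nv H) -> 'I_(nv Q)) : Prop :=
  injective gK /\ injective gH /\
  (forall x y, gK x = gH y <-> R x y) /\
  (forall q, (exists x, gK x = q) \/ (exists y, gH y = q)) /\
  (forall p q, edge Q p q <->
     (exists x y, [/\ gK x = p, gK y = q & edge K x y]) \/
     (exists x y, [/\ gH x = p, gH y = q & edge H x y])).

(* ker b = ker c : same length and the same positions carry equal entries. *)
Definition same_ker (m n : nat) (b : seq 'I_m) (c : seq 'I_n) : Prop :=
  size b = size c /\
  forall i j, i < size b -> j < size b ->
    (nth 0 (map val b) i == nth 0 (map val b) j) =
    (nth 0 (map val c) i == nth 0 (map val c) j).

Definition graphM : graph := @Graph 1 (fun _ _ => false).
Definition graphN0 : graph := @Graph 0 (fun _ _ => false).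
Definition vM : 'I_(nv graphM) := ord0.

(* A skew graph category: a set of isomorphism classes of bilabelled graphs,
   represented as an isomorphism-invariant predicate on bilabelled graphs. *)
Definition skew_graph_category (C : bilab -> Prop) : Prop :=
  [/\ (forall X Y, C X -> iso_bl X Y -> C Y),
      C (@BL graphN0 [::] [::]),
      C (@BL graphM [:: vM] [:: vM]),
      C (@BL graphM [::] [:: vM; vM]) &
   [/\
    (forall X Y, C X -> C Y ->
      forall (R : 'I_(nv (bgr X)) -> 'I_(nv (bgr Y)) -> Prop), overlap R ->
      forall Q gK gH, glue R gK gH ->
        C (@BL Q (map gK (bin X) ++ map gH (bin Y))
                 (map gK (bout X) ++ map gH (bout Y)))),
    (* closure under compositions Y . X with ker (bout X) = ker (bin Y) *)
    (forall X Y, C X -> C Y -> same_ker (bout X) (bin Y) ->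
      forall Q gK gH,
        glue (fun x y => (x, y) \in zip (bout X) (bin Y)) gK gH ->
        C (@BL Q (map gK (bin X)) (map gH (bout Y)))) &
    (forall X, C X -> C (@BL (bgr X) (bout X) (bin X)))]].

Section Tensors.
Variable G : graph.
Local Notation n := (nv G).

(* The space Hom((C^n)^{⊗k}, (C^n)^{⊗l}), as matrices indexed by
   (output tuple j, input tuple i).  C is modelled by algC. *)
Definition tensor_space (k l : nat) :=
  {ffun (l.-tuple 'I_n * k.-tuple 'I_n) -> algC^o}.

Definition is_inj_hom (K : graph) (phi : {ffun 'I_(nv K) -> 'I_n}) : bool :=
  injectiveb phi && [forall x, forall y, edge K x y ==> edge G (phi x) (phi y)].

Definition T_hat (k l : nat) (K : bilab) : tensor_space k l :=
  [ffun ji : l.-tuple 'I_n * k.-tuple 'I_n =>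
     ((#|[set phi : {ffun 'I_(nv (bgr K)) -> 'I_n} |
          [&& is_inj_hom phi, map phi (bin K) == val ji.2
            & map phi (bout K) == val ji.1]]|)%N%:R)%R].

Definition CG_space (C : bilab -> Prop) (k l : nat) (v : tensor_space k l) : Prop :=
  exists s : seq bilab,
    (forall K, Stdlib.Lists.List.In K s -> [/\ C K, size (bin K) = k & size (bout K) = l]) /\
    v \in <<map (T_hat k l) s>>%VS.

Definition T_ab (k l : nat) (ab : k.-tuple 'I_n * l.-tuple 'I_n) : tensor_space k l :=
  T_hat k l (@BL G (val ab.1) (val ab.2)).

Definition is_aut (s : {perm 'I_n}) : bool :=
  [forall x, forall y, edge G x y == edge G (s x) (s y)].

Definition same_orbit (k l : nat) (ab ab' : k.-tuple 'I_n * l.-tuple 'I_n) : bool :=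
  [exists s : {perm 'I_n}, [&& is_aut s, map s (val ab.1) == val ab'.1
                                 & map s (val ab.2) == val ab'.2]].

End Tensors.

Arguments is_inj_hom : clear implicits.
Arguments T_hat : clear implicits.
Arguments CG_space : clear implicits.
Arguments T_ab : clear implicits.
Arguments is_aut : clear implicits.
Arguments same_orbit : clear implicits.

(* Main.v *)
Require Import Defs.
From mathcomp Require Import all_boot all_order all_algebra fingroup perm algC.
Set Implicit Arguments. Unset Strict Implicit. Unset Printing Implicit Defensive.
Import GRing.Theory Num.Theory.
Local Open Scope ring_scope.

Section Aux.
Variable G : graph.
Local Notation n := (nv G).

Lemma hom_reflect (psi : {ffun 'I_n -> 'I_n}) :
  is_inj_hom G G psi -> forall x y, edge G (psi x) (psi y) = edge G x y.
Proof.
case/andP=> /injectiveP inj /forallP hom x y.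
apply/idP/idP; last by move=> e; have := hom x => /forallP/(_ y)/implyP; apply.
pose E := [set p : 'I_n * 'I_n | edge G p.1 p.2].
pose f := fun p : 'I_n * 'I_n => (psi p.1, psi p.2).
have finj : injective f.
  by move=> [a b] [c d]; rewrite /f /= => -[/inj -> /inj ->].
have sub : f @: E \subset E.
  apply/subsetP=> q /imsetP[p]; rewrite inE => ep ->; rewrite inE /=.
  by have := hom p.1 => /forallP/(_ p.2)/implyP; apply.
have eq : f @: E = E.
  by apply/eqP; rewrite eqEcard sub (card_imset _ finj) /= leqnn.
move=> e; have : (psi x, psi y) \in f @: E by rewrite eq inE.
case/imsetP=> p; rewrite inE => ep [/inj e1 /inj e2].
by move: ep; rewrite -e1 -e2.
Qed.

Definition compf (m : nat) (psi : {ffun 'I_n -> 'I_n}) (phi : {ffun 'I_m -> 'I_n})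
  : {ffun 'I_m -> 'I_n} := [ffun x => psi (phi x)].

Lemma hom_comp (K : graph) psi phi : is_inj_hom G G psi ->
  is_inj_hom G K (compf psi phi) = is_inj_hom G K phi.
Proof.
move=> hpsi; have refl := hom_reflect hpsi.
move: hpsi => /andP[/injectiveP ipsi _].
rewrite /is_inj_hom; congr (_ && _).
  apply/injectiveP/injectiveP => [ic x y e|iphi x y].
    by apply: ic; rewrite /compf !ffunE e.
  by rewrite /compf !ffunE => /ipsi /iphi.
apply: eq_forallb => x; apply: eq_forallb => y.
by rewrite /compf !ffunE refl.
Qed.

Lemma T_hat_sum k l (K : bilab) ji : T_hat G k l K ji =
  \sum_(phi | is_inj_hom G (bgr K) phi)
     ((map phi (bin K) == val ji.2) && (map phi (bout K) == val ji.1))%:R.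
Proof.
rewrite ffunE cardsE -sum1_card natr_sum big_mkcondr /=.
apply: eq_bigr => phi _; by case: ifP.
Qed.

Definition mkab (K : bilab) (phi : {ffun 'I_(nv (bgr K)) -> 'I_n}) :=
  (map_tuple phi (in_tuple (bin K)), map_tuple phi (in_tuple (bout K))).

Lemma compf_inj m psi : is_inj_hom G G psi -> injective (@compf m psi).
Proof.
case/andP=> /injectiveP ipsi _ f g e; apply/ffunP=> x.
by have := congr1 (fun h : {ffun _ -> _} => h x) e; rewrite /compf !ffunE => /ipsi.
Qed.

Lemma averaging (K : bilab) ji :
  (#|[pred psi : {ffun 'I_n -> 'I_n} | is_inj_hom G G psi]|)%:R *
     T_hat G (size (bin K)) (size (bout K)) K ji
  = \sum_(phi | is_inj_hom G (bgr K) phi) T_ab G _ _ (mkab phi) ji.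
Proof.
rewrite T_hat_sum.
under [RHS]eq_bigr => phi _ do rewrite /T_ab T_hat_sum /=.
rewrite exchange_big /= -sum1_card natr_sum mulr_suml.
apply: eq_big => [psi|psi hpsi]; first by rewrite inE.
rewrite inE in hpsi; rewrite mul1r (reindex_inj (compf_inj hpsi)) /=.
apply: eq_big => [phi|phi _]; first by rewrite hom_comp.
have this : forall s, map (compf psi phi) s = map psi (map phi s).
  by move=> s; rewrite -map_comp; apply: eq_map => x; rewrite /compf ffunE.
by rewrite !this.
Qed.

Lemma id_hom : is_inj_hom G G [ffun x => x].
Proof.
apply/andP; split.
  by apply/injectiveP=> x y; rewrite !ffunE.
by apply/forallP=> x; apply/forallP=> y; rewrite !ffunE implybb.
Qed.

Lemma T_hat_in_span (C : bilab -> Prop) (K : bilab) k l :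
  skew_graph_category C -> C (@BL G [::] [::]) -> C K ->
  size (bin K) = k -> size (bout K) = l ->
  exists S : seq (k.-tuple 'I_n * l.-tuple 'I_n),
    (forall ab, ab \in S -> C (@BL G (val ab.1) (val ab.2))) /\
    T_hat G k l K \in <<map (T_ab G k l) S>>%VS.
Proof.
move=> hC hG hK <- <-.
exists [seq mkab phi | phi <- enum [pred phi | is_inj_hom G (bgr K) phi]]; split.
  move=> ab /mapP[phi]; rewrite mem_enum inE => hphi ->.
  case: hC => _ _ _ _ [hU _ _].
  have := hU K (@BL G [::] [::]) hK hG (fun x y => phi x = y) _ G phi id.
  move: (hphi) => /andP[/injectiveP iphi /forallP hom].
  have ov : overlap (fun x y => phi x = y).
    by split=> [x y y' <- <-|x x' y <- /iphi].
  move=> /(_ ov); rewrite /= !cats0; apply.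
  split; first exact: iphi.
  split; first by move=> x y.
  split; first by move=> x y.
  split; first by move=> q; right; exists q.
  move=> p q; split=> [e|[[x [y [<- <- e]]]|[x [y [<- <- e]]]]].
  - by right; exists p, q.
  - by have := hom x => /forallP/(_ y)/implyP; apply.
  - exact: e.
set H := #|[pred psi : {ffun 'I_n -> 'I_n} | is_inj_hom G G psi]|.
have H0 : (H%:R : algC) != 0.
  rewrite pnatr_eq0 -lt0n; apply/card_gt0P; exists [ffun x => x].
  by rewrite inE id_hom.
have eqs : (H%:R : algC) *: T_hat G (size (bin K)) (size (bout K)) K =
    \sum_(phi | is_inj_hom G (bgr K) phi) T_ab G _ _ (mkab phi).
  apply/ffunP=> ji; rewrite [RHS]sum_ffunE -averaging.
  by rewrite [LHS]ffunE.
have -> : T_hat G (size (bin K)) (size (bout K)) K =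
    (H%:R)^-1 *: \sum_(phi | is_inj_hom G (bgr K) phi) T_ab G _ _ (mkab phi).
  by rewrite -eqs scalerA mulVf // scale1r.
apply: rpredZ; apply: rpred_sum => phi hphi.
apply: memv_span; apply: map_f; apply: map_f.
by rewrite mem_enum inE.
Qed.

Lemma map_idf (s : seq 'I_n) : map [ffun x : 'I_n => x] s = s.
Proof. by rewrite (@eq_map _ _ _ id) ?map_id // => x; rewrite ffunE. Qed.

Lemma T_ab_nz k l (ab : k.-tuple 'I_n * l.-tuple 'I_n) :
  T_ab G k l ab (ab.2, ab.1) != 0.
Proof.
rewrite /T_ab ffunE pnatr_eq0 -lt0n; apply/card_gt0P; exists [ffun x => x].
by rewrite inE id_hom /= !map_idf !eqxx.
Qed.

Lemma T_ab_orbit k l (ab ab' : k.-tuple 'I_n * l.-tuple 'I_n) :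
  T_ab G k l ab (ab'.2, ab'.1) != 0 -> same_orbit G k l ab ab'.
Proof.
rewrite /T_ab ffunE pnatr_eq0 -lt0n => /card_gt0P[psi]; rewrite inE /=.
case/and3P=> hpsi e1 e2.
have ipsi : injective psi by case/andP: hpsi => /injectiveP.
have mp : forall s, map (perm ipsi) s = map psi s.
  by move=> s; apply: eq_map => x; rewrite permE.
apply/existsP; exists (perm ipsi); rewrite !mp e1 e2 !andbT.
apply/forallP=> x; apply/forallP=> y; by rewrite !permE (hom_reflect hpsi).
Qed.

Lemma same_orbit_sym k l (ab ab' : k.-tuple 'I_n * l.-tuple 'I_n) :
  same_orbit G k l ab ab' -> same_orbit G k l ab' ab.
Proof.
case/existsP=> s /and3P[ha e1 e2]; apply/existsP; exists (s^-1)%g.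
have mK : forall t : seq 'I_n, map (s^-1)%g (map s t) = t.
  by move=> t; rewrite -map_comp (@eq_map _ _ _ id) ?map_id // => x /=; rewrite permK.
rewrite -(eqP e1) -(eqP e2) !mK !eqxx !andbT.
apply/forallP=> x; apply/forallP=> y.
have := (forallP ha) ((s^-1)%g x) => /forallP/(_ ((s^-1)%g y)); rewrite !permKV eq_sym //.
Qed.
End Aux.

Lemma In_mem (T : eqType) (x : T) (s : seq T) : List.In x s -> x \in s.
Proof.
elim: s => [//|y s IH] /= H; rewrite in_cons; case: H => [->|/IH ->]; by rewrite ?eqxx ?orbT.
Qed.

Theorem proposition4p13 :
  forall (C : bilab -> Prop) (G : graph),
    skew_graph_category C -> C (@BL G [::] [::]) ->
    forall k l : nat,
      (forall v : tensor_space G k l,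
         CG_space G C k l v <->
         exists s : seq (k.-tuple 'I_(nv G) * l.-tuple 'I_(nv G)),
           (forall ab, ab \in s -> C (@BL G (val ab.1) (val ab.2))) /\
           v \in <<map (T_ab G k l) s>>%VS) /\
      (forall s : seq (k.-tuple 'I_(nv G) * l.-tuple 'I_(nv G)),
         (forall ab, ab \in s -> C (@BL G (val ab.1) (val ab.2))) ->
         pairwise (fun ab ab' => ~~ same_orbit G k l ab ab') s ->
         free (map (T_ab G k l) s)).
Proof.
move=> C G hC hG k l; split.
  move=> v; split.
    case=> s0 [hs0 hv].
    have [S [hS sub]] : exists S : seq (k.-tuple 'I_(nv G) * l.-tuple 'I_(nv G)),
        (forall ab, ab \in S -> C (@BL G (val ab.1) (val ab.2))) /\
        (<<map (T_hat G k l) s0>> <= <<map (T_ab G k l) S>>)%VS.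
      elim: s0 hs0 {hv} => [|K s0 IH] hs0.
        by exists [::]; split => //; rewrite span_nil sub0v.
      have [hK hk hl] := hs0 K (or_introl erefl).
      have [S1 [h1 m1]] := T_hat_in_span hC hG hK hk hl.
      have [S2 [h2 m2]] := IH (fun K' hK' => hs0 K' (or_intror hK')).
      exists (S1 ++ S2); split.
        by move=> ab; rewrite mem_cat => /orP[/h1|/h2].
      rewrite /= span_cons map_cat span_cat subv_add; apply/andP; split.
        by rewrite -memvE; apply: (subvP (addvSl _ _)).
      exact: (subv_trans m2 (addvSr _ _)).
    by exists S; split=> //; exact: (subvP sub).
  case=> s [hs hv].
  exists (map (fun ab => @BL G (val ab.1) (val ab.2)) s); split.
    move=> K /List.in_map_iff [ab [<- hab]].
    by split; [apply: hs; apply: In_mem | rewrite /= size_tuple..].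
  by rewrite -map_comp.
move=> s _ hpw.
case E: s => [|ab0 s0]; first by rewrite /= /free span_nil dimv0.
rewrite -E.
apply/(@freeP _ _ _ (in_tuple (map (T_ab G k l) s))) => c hsum i.
have nthE : forall j : 'I_(size [seq T_ab G k l i | i <- s]),
    (in_tuple [seq T_ab G k l i | i <- s])`_j = T_ab G k l (nth ab0 s j).
  by move=> j; rewrite /= (nth_map ab0) // -(size_map (T_ab G k l)).
have szi : forall j : 'I_(size [seq T_ab G k l i | i <- s]), (j < size s)%N.
  by move=> j; rewrite -(size_map (T_ab G k l)).
pose ji := ((nth ab0 s i).2, (nth ab0 s i).1).
have := congr1 (fun f : tensor_space G k l => f ji) hsum.
rewrite sum_ffunE ffunE (bigD1 i) //= big1 ?addr0.
  rewrite ffunE nthE => /eqP; rewrite scaler_eq0 (negbTE (T_ab_nz _)) orbF.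
  by move/eqP.
move=> j hji; rewrite ffunE nthE.
suff -> : T_ab G k l (nth ab0 s j) ji = 0 by rewrite scaler0.
apply/eqP; apply/negPn/negP => /T_ab_orbit so.
have /pairwiseP pw := hpw; have := pw ab0.
move: hji; rewrite neq_ltn => /orP[lt|lt] pwh.
  by have := pwh j i (szi j) (szi i) lt; rewrite so.
by have := pwh i j (szi i) (szi j) lt; rewrite (same_orbit_sym so).
Qed.
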